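(* Let $\mathbf{S}=(S_n)_{n\in\mathbb{N}}$ be a stationary ergodic information source with finite alphabet $A=\{1,\ldots,N\}$ (ordered by the usual order of integers), and let $R_n=\sum_{i=1}^{n}\delta(S_i\le S_n)$ be its rank variables. Then for every $l\ge 1$, \[ \lim_{k\to\infty} H_m\big(R_{k+1}^{k+l}\,\big|\,S_1^{k}\big)=\lim_{k\to\infty} H_m\big(S_{k+1}^{k+l}\,\big|\,S_1^{k}\big). \]
   Context: A finite-alphabet information source is a discrete-time stochastic process $\mathbf{S}=(S_n)_{n\in\mathbb{N}}$ of random variables with values in a finite alphabet $A$; it is stationary and ergodic if its sequence-space model $(A^{\mathbb{N}},\mathcal{Z},m,\sigma)$ (with $m$ the induced shift-invariant distribution on output sequences and $\sigma$ the left shift) is stationary and ergodic. For a proposition $P$, $\delta(P)=1$ if $P$ holds and $0$ otherwise. The rank variable $R_n=\sum_{i=1}^n\delta(S_i\le S_n)$ takes values in $\{1,\ldots,n\}$. For indices $i\le j$, $S_i^j$ denotes the word $S_i S_{i+1}\cdots S_j$, and similarly $R_i^j$. $H_m(\cdot\mid\cdot)$ denotes Shannon conditional entropy (logarithm base 2) computed with respect to the joint distribution of the process. *)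

(* Defs.v *)
From HB Require Import structures.
From mathcomp Require Import all_boot all_order all_algebra.
From mathcomp Require Import all_classical all_reals all_analysis.
Set Implicit Arguments. Unset Strict Implicit. Unset Printing Implicit Defensive.
Import Order.TTheory GRing.Theory Num.Theory.
Local Open Scope classical_set_scope.
Local Open Scope ring_scope.

(* Conventions: the alphabet A = {1,..,N} is represented by 'I_N = {0,..,N-1}
   (order-preserving shift).  The process S_1, S_2, ... is represented by
   X : nat -> T -> 'I_N with X i = S_{i+1} (0-based indexing). *)

Section Source.
Variables (d : measure_display) (T : measurableType d) (R : realType).
Variable (P : probability T R).
Variable (N : nat).
Implicit Types (X : nat -> T -> 'I_N).

(* word X_k ... X_{k+n-1}, i.e. S_{k+1}^{k+n} *)
Definition word X (k n : nat) (w : T) : n.-tuple 'I_N :=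
  [tuple X (k + i) w | i < n].

Definition is_source X : Prop :=
  forall n (a : 'I_N), measurable [set w | X n w = a].

Definition stationary X : Prop :=
  forall (k n : nat) (v : n.-tuple 'I_N),
    P [set w | word X k n w = v] = P [set w | word X 0 n w = v].

Definition cylinders : set_system (nat -> 'I_N) :=
  [set C | exists n (v : n.-tuple 'I_N),
     C = [set x : nat -> 'I_N | mktuple (fun i : 'I_n => x (nat_of_ord i)) = v]].

Definition shift (x : nat -> 'I_N) : nat -> 'I_N := fun n => x n.+1.

(* ergodicity of the sequence-space model (A^N, Z, m, shift) where m is
   the law of the path w |-> (X n w)_n *)
Definition ergodic X : Prop :=
  forall B : set (nat -> 'I_N), <<s cylinders >> B ->
    shift @^-1` B = B ->
    P [set w | B (fun n => X n w)] = 0%E \/ P [set w | B (fun n => X n w)] = 1%E.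

Definition pr (E : set T) : R := fine (P E).

Definition log2 (x : R) : R := ln x / ln 2.

Definition condH (U V : finType) (Y : T -> U) (Z : T -> V) : R :=
  - \sum_(u : U) \sum_(v : V)
      (let pj := pr [set w | Y w = u /\ Z w = v] in
       let pz := pr [set w | Z w = v] in
       if pj == 0 then 0 else pj * log2 (pj / pz)).

(* rank variable R_n = sum_{i=1}^n delta(S_i <= S_n) for n >= 1 *)
Definition rank X (n : nat) (w : T) : nat :=
  \sum_(i < n) ((X i w <= X n.-1 w)%N : nat).

(* the word R_{k+1}^{k+l}; each R_m (m <= k+l) takes values in {1..k+l},
   stored in 'I_(k+l).+1 without loss *)
Definition rank_word X (k l : nat) (w : T) : l.-tuple 'I_(k + l).+1 :=
  [tuple (inord (rank X (k + i).+1 w) : 'I_(k + l).+1) | i < l].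

End Source.

(* Main.v *)
Require Import Defs.
From HB Require Import structures.
From mathcomp Require Import all_boot all_order all_algebra.
From mathcomp Require Import all_classical all_reals all_analysis.
From mathcomp Require Import ring lra zify.
Import Order.TTheory GRing.Theory Num.Theory.
Import numFieldNormedType.Exports.
Local Open Scope classical_set_scope.
Local Open Scope ring_scope.
Set Implicit Arguments. Unset Strict Implicit. Unset Printing Implicit Defensive.
Section Prob.
Context (d : measure_display) (T : measurableType d) (R : realType)
  (P : probability T R).
Local Notation pr := (pr P).

Lemma P_fin (A : set T) : measurable A -> P A \is a fin_num.
Proof.
move=> mA; rewrite ge0_fin_numE //.
exact: (le_lt_trans (probability_le1 P mA) (ltey _)).
Qed.

Lemma prE A : measurable A -> P A = (pr A)%:E.
Proof. by move=> mA; rewrite /Defs.pr fineK // P_fin. Qed.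

Lemma pr_ge0 A : 0 <= pr A.
Proof. exact: fine_ge0. Qed.

Lemma pr_le1 A : measurable A -> pr A <= 1.
Proof. by move=> mA; rewrite -lee_fin -prE //; exact: probability_le1. Qed.

Lemma prT : pr setT = 1.
Proof. by rewrite /Defs.pr probability_setT. Qed.

Lemma prU A B : measurable A -> measurable B -> A `&` B = set0 ->
  pr (A `|` B) = pr A + pr B.
Proof.
move=> mA mB AB; have mAB : measurable (A `|` B) by exact: measurableU.
by apply/eqP; rewrite -eqe EFinD -!prE // measureU.
Qed.

Lemma prU2 A B : measurable A -> measurable B -> pr (A `|` B) <= pr A + pr B.
Proof.
move=> mA mB; have mAB : measurable (A `|` B) by exact: measurableU.
rewrite -lee_fin -prE // EFinD -!prE //.
exact: measureU2.
Qed.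

Lemma pr_le A B : measurable A -> measurable B -> A `<=` B -> pr A <= pr B.
Proof.
move=> mA mB AB; rewrite -lee_fin -!prE //; apply: le_measure => //; rewrite inE //=.
Qed.

Definition mfin (U : finType) (Y : T -> U) := forall u, measurable [set w | Y w = u].

Lemma mfin_seq (U : finType) (Y : T -> U) (s : seq U) :
  mfin Y -> measurable [set w | Y w \in s].
Proof.
move=> mY; elim: s => [|u s IH].
  by rewrite (_ : [set w | _] = set0) //; apply/seteqP; split => w //=.
rewrite (_ : [set w | _] = [set w | Y w = u] `|` [set w | Y w \in s]).
  exact: measurableU.
apply/seteqP; split => w /=; rewrite inE.
  by case/orP => [/eqP|]; [left|right].
by case=> [->|->]; rewrite ?eqxx ?orbT.
Qed.

Lemma mfin_pre (U : finType) (Y : T -> U) (Q : pred U) :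
  mfin Y -> measurable [set w | Q (Y w)].
Proof.
move=> mY; rewrite (_ : [set w | _] = [set w | Y w \in enum Q]).
  exact: mfin_seq.
by apply/seteqP; split => w /=; rewrite mem_enum.
Qed.

Lemma pr_seq (U : finType) (Y : T -> U) (B : set T) (s : seq U) :
  mfin Y -> measurable B -> uniq s ->
  pr (B `&` [set w | Y w \in s]) = \sum_(u <- s) pr (B `&` [set w | Y w = u]).
Proof.
move=> mY mB; elim: s => [|u s IH].
  rewrite big_nil (_ : _ `&` _ = set0); first by rewrite /Defs.pr measure0.
  by apply/seteqP; split => w //= [].
move=> /= /andP[us /IH {}IH]; rewrite big_cons -IH.
rewrite (_ : _ `&` _ = (B `&` [set w | Y w = u]) `|` (B `&` [set w | Y w \in s])).
  rewrite prU //; first exact: measurableI.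
    by apply: measurableI => //; exact: mfin_seq.
  apply/seteqP; split => w //= [[_ ->] [_ us']]; by rewrite us' in us.
apply/seteqP; split => w /=.
  by move=> [Bw]; rewrite inE => /orP[/eqP|]; [left|right].
by move=> [[Bw ->]|[Bw us']]; split => //; rewrite inE ?eqxx ?us' ?orbT.
Qed.

Lemma pr_sumB (U : finType) (Y : T -> U) (B : set T) (Q : pred U) :
  mfin Y -> measurable B ->
  pr (B `&` [set w | Q (Y w)]) = \sum_(u | Q u) pr (B `&` [set w | Y w = u]).
Proof.
move=> mY mB; rewrite (_ : [set w | Q (Y w)] = [set w | Y w \in enum Q]).
  by rewrite pr_seq ?enum_uniq // big_enum_cond /=; apply: eq_bigl => u; rewrite andbT.
by apply/seteqP; split => w /=; rewrite mem_enum.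
Qed.

Lemma pr_sum (U : finType) (Y : T -> U) (Q : pred U) :
  mfin Y -> pr [set w | Q (Y w)] = \sum_(u | Q u) pr [set w | Y w = u].
Proof.
move=> mY; have := pr_sumB Q mY (@measurableT _ T); rewrite setTI => ->.
by apply: eq_bigr => u _; rewrite setTI.
Qed.

Lemma pr_sum1 (U : finType) (Y : T -> U) :
  mfin Y -> \sum_u pr [set w | Y w = u] = 1.
Proof.
move=> mY; rewrite (eq_bigl predT) // -pr_sum //.
by rewrite (_ : [set w | predT (Y w)] = setT) ?prT //; apply/seteqP; split.
Qed.

Lemma mfin_pair (U V : finType) (Y : T -> U) (Z : T -> V) :
  mfin Y -> mfin Z -> mfin (fun w => (Y w, Z w)).
Proof.
move=> mY mZ [u v]; rewrite (_ : [set w | _] = [set w | Y w = u] `&` [set w | Z w = v]).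
  exact: measurableI.
by apply/seteqP; split => w /=; [case=> -> ->|case=> -> ->].
Qed.

Lemma mfin_comp (U V : finType) (Y : T -> U) (f : U -> V) :
  mfin Y -> mfin (fun w => f (Y w)).
Proof.
move=> mY v; rewrite (_ : [set w | _] = [set w | (fun u => f u == v) (Y w)]).
  exact: (mfin_pre (fun u => f u == v) mY).
by apply/seteqP; split => w /= /eqP.
Qed.

End Prob.
Section Ent.
Context (R : realType).

Lemma ln_le_sub1 (x : R) : 0 < x -> ln x <= x - 1.
Proof.
move=> x0; have := @le_ln1Dx R (x - 1).
have -> : 1 + (x - 1) = x by ring.
apply; lra.
Qed.

Definition phi (a b : R) := if a == 0 then 0 else a * ln (b / a).

Lemma phi0 b : phi 0 b = 0.
Proof. by rewrite /phi eqxx. Qed.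

Lemma xlnx (x : R) : 0 < x -> x * ln (x^-1) <= 2 * Num.sqrt x.
Proof.
move=> x0; set s := Num.sqrt x.
have s0 : 0 < s by rewrite sqrtr_gt0.
have xs : x = s * s by rewrite -expr2 sqr_sqrtr // ltW.
have si : 0 < s^-1 by rewrite invr_gt0.
rewrite xs invfM lnM ?posrE //.
have := ln_le_sub1 si => h.
have -> : s * s * (ln s^-1 + ln s^-1) = 2 * s * (s * ln s^-1) by ring.
rewrite -[X in _ <= X]mulr1 ler_wpM2l //; first by rewrite mulr_ge0 // ltW.
have : s * ln s^-1 <= s * (s^-1 - 1) by rewrite ler_wpM2l // ltW.
rewrite mulrBr mulfV ?gt_eqF //; lra.
Qed.

Lemma logsum (I : finType) (D : pred I) (a b : I -> R) :
  (forall i, D i -> 0 <= a i) -> (forall i, D i -> 0 < a i -> 0 < b i) ->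
  (forall i, D i -> 0 <= b i) ->
  \sum_(i | D i) phi (a i) (b i) <=
  phi (\sum_(i | D i) a i) (\sum_(i | D i) b i).
Proof.
move=> a0 ab b0; set A := \sum_(i | D i) a i; set B := \sum_(i | D i) b i.
have A0 : 0 <= A by apply: sumr_ge0.
have [AE|AN] := eqVneq A 0.
  rewrite AE phi0 big1 // => i Di.
  by rewrite (psumr_eq0P a0 AE Di) phi0.
have Ap : 0 < A by rewrite lt_def AN.
have [i Di ai] : exists2 i, D i & a i != 0.
  apply/exists_inP; apply: contraNT AN; rewrite negb_exists_in => /forall_inP h.
  by rewrite /A big1 // => i Di; apply/eqP; have := h i Di; rewrite negbK.
have Bp : 0 < B.
  have aip : 0 < a i by rewrite lt_def ai a0.
  apply: (lt_le_trans (ab i Di aip)).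
  rewrite /B (bigD1 i) //= lerDl; apply: sumr_ge0 => j /andP[Dj _]; exact: b0.
rewrite /phi (negbTE AN).
apply: (@le_trans _ _ (\sum_(i | D i) (b i * (A / B) - a i + a i * ln (B / A)))).
  apply: ler_sum => j Dj; case: ifPn => [/eqP aj0|aj].
    rewrite aj0 subr0 mul0r addr0; apply: mulr_ge0; first exact: b0.
    by rewrite divr_ge0 // ltW.
  have ajp : 0 < a j by rewrite lt_def aj a0.
  have bjp := ab j Dj ajp.
  have -> : b j / a j = (b j * A / (a j * B)) * (B / A).
    by field; rewrite !gt_eqF.
  rewrite lnM ?posrE ?divr_gt0 ?mulr_gt0 // mulrDr lerD2r.
  have := ln_le_sub1 (x := b j * A / (a j * B)).
  rewrite divr_gt0 ?mulr_gt0 // => /(_ isT) h.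
  have : a j * ln (b j * A / (a j * B)) <= a j * (b j * A / (a j * B) - 1).
    by rewrite ler_wpM2l // ltW.
  have -> : a j * (b j * A / (a j * B) - 1) = b j * (A / B) - a j.
    by field; rewrite !gt_eqF.
  done.
rewrite big_split /= big_split /= sumrN -mulr_suml -mulr_suml.
rewrite -/A -/B mulrA mulrC mulrA mulVf ?gt_eqF // mul1r; lra.
Qed.

Definition pz (U V : finType) (p : U -> V -> R) v := \sum_u p u v.
Definition Hl (U V : finType) (p : U -> V -> R) :=
  \sum_u \sum_v phi (p u v) (pz p v).

Lemma Hl_mono (U V W : finType) (p2 : U -> W -> R) (g : W -> V) :
  (forall u z, 0 <= p2 u z) ->
  Hl p2 <= Hl (fun u v => \sum_(z | g z == v) p2 u z).
Proof.
move=> p0; rewrite /Hl; apply: ler_sum => u _.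
rewrite (partition_big g predT) //=; apply: ler_sum => v _.
have -> : pz (fun u v => \sum_(z | g z == v) p2 u z) v =
          \sum_(z | g z == v) pz p2 z.
  by rewrite /pz exchange_big.
apply: logsum => [z _|z _ a0|z _] //.
  apply: (lt_le_trans a0); rewrite /pz (bigD1 u) //= lerDl.
  by apply: sumr_ge0 => *; exact: p0.
by apply: sumr_ge0 => *; exact: p0.
Qed.

End Ent.
Section Fano.
Context (R : realType) (U V Rr : finType) (p : U -> V -> R)
  (F : U -> V -> Rr) (good : U -> V -> bool).
Hypothesis p0 : forall u v, 0 <= p u v.
Hypothesis p1 : \sum_u \sum_v p u v = 1.
Hypothesis Finj : forall v u u', good u v -> good u' v -> F u v = F u' v -> u = u'.

Definition pF r v := \sum_(u | F u v == r) p u v.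
Definition Mf u v := pF (F u v) v.
Definition psi (a b m : R) := if a == 0 then 0 else a * ln (b / m).
Definition chi (a m : R) := if a == 0 then 0 else a * ln (m / a).
Definition epsb := \sum_(x : U * V | ~~ good x.1 x.2) p x.1 x.2.

Lemma sum_le_cond (I : finType) (P : pred I) (f : I -> R) :
  (forall i, 0 <= f i) -> \sum_(i | P i) f i <= \sum_i f i.
Proof.
move=> f0; rewrite big_mkcond /=; apply: ler_sum => i _.
by case: ifP.
Qed.

Lemma pz_pF v : pz pF v = pz p v.
Proof.
rewrite /pz /pF (exchange_big_dep predT) //=; apply: eq_bigr => u _.
by rewrite (eq_bigl (fun r => r == F u v)) ?big_pred1_eq // => r; rewrite eq_sym.
Qed.

Lemma M_ge u v : p u v <= Mf u v.
Proof.
rewrite /Mf /pF (bigD1 u) //= lerDl; exact: sumr_ge0.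
Qed.

Lemma M_le u v : Mf u v <= pz p v.
Proof. exact: sum_le_cond. Qed.

Lemma HlpF : Hl pF = \sum_u \sum_v psi (p u v) (pz p v) (Mf u v).
Proof.
rewrite /Hl; under eq_bigr do under eq_bigr do rewrite pz_pF.
rewrite exchange_big [RHS]exchange_big /=; apply: eq_bigr => v _.
rewrite [RHS](partition_big (fun u => F u v) predT) //=; apply: eq_bigr => r _.
have -> : \sum_(u | true && (F u v == r)) psi (p u v) (pz p v) (Mf u v) =
          \sum_(u | F u v == r) psi (p u v) (pz p v) (pF r v).
  by apply: eq_bigr => u /eqP Fu; rewrite /Mf Fu.
rewrite /phi; case: ifPn => [/eqP m0|m0].
  symmetry; apply: big1 => u Fu.
  by rewrite /psi (psumr_eq0P (fun u _ => p0 u v) m0 Fu) eqxx.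
rewrite /pF mulr_suml; apply: eq_bigr => u _; rewrite /psi.
by case: ifPn => [/eqP->|//]; rewrite mul0r.
Qed.

Lemma D_eq : Hl p - Hl pF = \sum_u \sum_v chi (p u v) (Mf u v).
Proof.
rewrite HlpF /Hl -sumrB; apply: eq_bigr => u _; rewrite -sumrB.
apply: eq_bigr => v _; rewrite /phi /psi /chi; case: ifPn => [_|pn0].
  by rewrite subr0.
have pp : 0 < p u v by rewrite lt_def pn0 p0.
have Mp : 0 < Mf u v := lt_le_trans pp (M_ge u v).
have zp : 0 < pz p v := lt_le_trans Mp (M_le u v).
rewrite !ln_div ?posrE //; ring.
Qed.

Lemma chi_ge0 u v : 0 <= chi (p u v) (Mf u v).
Proof.
rewrite /chi; case: ifPn => // pn0.
have pp : 0 < p u v by rewrite lt_def pn0 p0.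
apply: mulr_ge0 => //; apply: ln_ge0.
by rewrite ler_pdivlMr // mul1r M_ge.
Qed.

Lemma D_ge0 : 0 <= \sum_u \sum_v chi (p u v) (Mf u v).
Proof. by apply: sumr_ge0 => u _; apply: sumr_ge0 => v _; exact: chi_ge0. Qed.

Lemma good_part v :
  \sum_(u | good u v) chi (p u v) (Mf u v) <= \sum_(u | ~~ good u v) p u v.
Proof.
apply: (@le_trans _ _ (\sum_(u | good u v)
     \sum_(u' | ~~ good u' v && (F u' v == F u v)) p u' v)).
  apply: ler_sum => u gu.
  have -> : \sum_(u' | ~~ good u' v && (F u' v == F u v)) p u' v =
            Mf u v - p u v.
    rewrite /Mf /pF [in RHS](bigD1 u) //= [X in X - _]addrC addrK; apply: eq_bigl => u'.
    case g' : (good u' v) => /=.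
      apply/esym/negbTE/andP => -[/eqP e ne].
      by move: ne; rewrite (Finj g' gu e) eqxx.
    case: (F u' v == F u v) => //=; apply/esym/negP => /eqP e.
    by move: g'; rewrite e gu.
  rewrite /chi; case: ifPn => [_|pn0].
    by rewrite subr_ge0 M_ge.
  have pp : 0 < p u v by rewrite lt_def pn0 p0.
  have := ln_le_sub1 (x := Mf u v / p u v); rewrite divr_gt0 //.
    move=> /(_ isT) h.
    have : p u v * ln (Mf u v / p u v) <= p u v * (Mf u v / p u v - 1).
      by rewrite ler_wpM2l // ltW.
    by rewrite mulrBr mulr1 mulrCA mulfV ?gt_eqF // mulr1.
  exact: lt_le_trans pp (M_ge u v).
rewrite (exchange_big_dep (fun u' => ~~ good u' v)) /=; last first.
  by move=> u u' _ /andP[].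
apply: ler_sum => u' bu'.
have [u0 Hu0|] := pickP (fun u => good u v && (~~ good u' v && (F u' v == F u v))).
  rewrite (eq_bigl (pred1 u0)) ?big_pred1_eq // => u /=.
  apply/idP/eqP => [Hu|->//].
  move: Hu0 Hu => /andP[g0 /andP[_ /eqP e0]] /andP[g1 /andP[_ /eqP e1]].
  by apply: (Finj g1 g0); rewrite -e1 -e0.
by move=> h; rewrite big_pred0 // p0.
Qed.

Lemma pairE (f : U -> V -> R) :
  \sum_v \sum_(u | ~~ good u v) f u v = \sum_(x : U * V | ~~ good x.1 x.2) f x.1 x.2.
Proof.
rewrite (exchange_big_dep predT) //= pair_big_dep /=.
by apply: eq_bigl => x.
Qed.

Lemma sumpz : \sum_v pz p v = 1.
Proof. by rewrite /pz exchange_big. Qed.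

Lemma bad_part :
  \sum_v \sum_(u | ~~ good u v) chi (p u v) (Mf u v) <=
  epsb * ln (#|U|%:R) + 2 * Num.sqrt epsb.
Proof.
apply: (@le_trans _ _ (\sum_v \sum_(u | ~~ good u v) phi (p u v) (pz p v))).
  apply: ler_sum => v _; apply: ler_sum => u _.
  rewrite /chi /phi; case: ifPn => // pn0.
  have pp : 0 < p u v by rewrite lt_def pn0 p0.
  have Mp : 0 < Mf u v := lt_le_trans pp (M_ge u v).
  have zp : 0 < pz p v := lt_le_trans Mp (M_le u v).
  rewrite ler_wpM2l ?p0 // ler_ln ?posrE ?divr_gt0 //.
  by rewrite ler_pM2r ?invr_gt0 // M_le.
rewrite pairE.
set B := \sum_(x : U * V | ~~ good x.1 x.2) pz p x.2.
have e0 : 0 <= epsb by apply: sumr_ge0 => x _.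
have eB : epsb <= B.
  apply: ler_sum => x _; rewrite /pz (bigD1 x.1) //= lerDl.
  exact: sumr_ge0.
have BK : B <= #|U|%:R.
  apply: (@le_trans _ _ (\sum_(x : U * V) pz p x.2)).
    by apply: sum_le_cond => x; apply: sumr_ge0.
  rewrite -(pair_big predT predT (fun u v => pz p v)) /=.
  under eq_bigr do rewrite sumpz.
  by rewrite sumr_const.
apply: (le_trans (logsum _ _ _)) => //.
- move=> x _ px; apply: (lt_le_trans px); rewrite /pz (bigD1 x.1) //= lerDl.
  exact: sumr_ge0.
- by move=> x _; apply: sumr_ge0.
rewrite -/epsb -/B /phi; case: ifPn => [/eqP ->|en0].
  by rewrite sqrtr0 mul0r mulr0 addr0.
have ep : 0 < epsb by rewrite lt_def en0 e0.
have Bp : 0 < B := lt_le_trans ep eB.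
have Kp : 0 < (#|U|%:R : R) := lt_le_trans Bp BK.
apply: (@le_trans _ _ (epsb * ln (#|U|%:R / epsb))).
  rewrite ler_wpM2l // ler_ln ?posrE ?divr_gt0 //.
  by rewrite ler_pM2r ?invr_gt0.
rewrite lnM ?posrE ?invr_gt0 // mulrDr lerD2l; exact: xlnx.
Qed.

Lemma fano : 0 <= Hl p - Hl pF <= epsb * (1 + ln (#|U|%:R)) + 2 * Num.sqrt epsb.
Proof.
rewrite D_eq D_ge0 /=.
rewrite exchange_big /=.
rewrite (eq_bigr (fun v => \sum_(u | good u v) chi (p u v) (Mf u v) +
                           \sum_(u | ~~ good u v) chi (p u v) (Mf u v))); last first.
  by move=> v _; rewrite (bigID (fun u => good u v)).
rewrite big_split /=.
have := bad_part; have : \sum_v \sum_(u | good u v) chi (p u v) (Mf u v) <= epsb.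
  rewrite /epsb -pairE; apply: ler_sum => v _; exact: good_part.
move=> h1 h2; lra.
Qed.

End Fano.
Lemma Hl_ge0 (R : realType) (U V : finType) (p : U -> V -> R) :
  (forall u v, 0 <= p u v) -> 0 <= Hl p.
Proof.
move=> p0; apply: sumr_ge0 => u _; apply: sumr_ge0 => v _.
rewrite /phi; case: ifPn => // pn0.
have pp : 0 < p u v by rewrite lt_def pn0 p0.
apply: mulr_ge0 => //; apply: ln_ge0.
rewrite ler_pdivlMr // mul1r /pz (bigD1 u) //= lerDl; exact: sumr_ge0.
Qed.
Section CondH.
Context (d : measure_display) (T : measurableType d) (R : realType)
  (P : probability T R).

Definition J (U V : finType) (Y : T -> U) (Z : T -> V) u v :=
  pr P [set w | Y w = u /\ Z w = v].

Lemma J_ge0 (U V : finType) (Y : T -> U) (Z : T -> V) u v : 0 <= J Y Z u v.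
Proof. exact: pr_ge0. Qed.

Lemma J_pz (U V : finType) (Y : T -> U) (Z : T -> V) v :
  mfin Y -> mfin Z -> pr P [set w | Z w = v] = pz (J Y Z) v.
Proof.
move=> mY mZ; have := pr_sumB P (fun _ => true) mY (mZ v).
rewrite (_ : _ `&` _ = [set w | Z w = v]); last first.
  by apply/seteqP; split => w /=; [case|].
move=> ->; apply: eq_bigr => u _; congr (pr P _).
by apply/seteqP; split => w /=; case.
Qed.

Lemma J_sum1 (U V : finType) (Y : T -> U) (Z : T -> V) :
  mfin Y -> mfin Z -> \sum_u \sum_v J Y Z u v = 1.
Proof.
move=> mY mZ; rewrite pair_big /=.
rewrite -(pr_sum1 P (mfin_pair mY mZ)); apply: eq_bigr => -[u v] _.
congr (pr P _); apply/seteqP; split => w /=; first by case=> -> ->.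
by case=> -> ->.
Qed.

Lemma ln2_gt0 : 0 < ln (2 : R).
Proof. by apply: ln_gt0; rewrite ltr1n. Qed.

Lemma condH_Hl (U V : finType) (Y : T -> U) (Z : T -> V) :
  mfin Y -> mfin Z -> condH P Y Z = Hl (J Y Z) / ln 2.
Proof.
move=> mY mZ; rewrite /condH /Hl mulr_suml -sumrN; apply: eq_bigr => u _.
rewrite mulr_suml -sumrN; apply: eq_bigr => v _ /=.
rewrite (J_pz v mY mZ) -/(J Y Z u v) /phi.
case: ifPn => [_|pn0]; first by rewrite mul0r oppr0.
have pp : 0 < J Y Z u v by rewrite lt_def pn0 J_ge0.
have zp : 0 < pz (J Y Z) v.
  apply: (lt_le_trans pp); rewrite /pz (bigD1 u) //= lerDl.
  by apply: sumr_ge0 => *; exact: J_ge0.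
rewrite /log2.
have -> : pz (J Y Z) v / J Y Z u v = (J Y Z u v / pz (J Y Z) v)^-1.
  by rewrite invf_div.
rewrite lnV ?posrE ?divr_gt0 //; ring.
Qed.

Lemma condH_mono (U V W : finType) (Y : T -> U) (Z2 : T -> W) (g : W -> V) :
  mfin Y -> mfin Z2 -> condH P Y Z2 <= condH P Y (fun w => g (Z2 w)).
Proof.
move=> mY mZ; have mgZ : mfin (fun w => g (Z2 w)) by exact: mfin_comp.
rewrite !condH_Hl // ler_pM2r ?invr_gt0 ?ln2_gt0 //.
have -> : J Y (fun w => g (Z2 w)) = (fun u v => \sum_(z | g z == v) J Y Z2 u z).
  apply/funext => u; apply/funext => v; rewrite /J.
  have := pr_sumB P (fun z => g z == v) mZ (mY u).
  rewrite (_ : _ `&` _ = [set w | Y w = u /\ g (Z2 w) = v]); last first.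
    by apply/seteqP; split => w /=; [case=> -> /eqP|case=> -> ->].
  move=> ->; apply: eq_bigr => z _; congr (pr P _).
by apply: Hl_mono => *; exact: J_ge0.
Qed.

Lemma condH_fano (U V Rr : finType) (Y : T -> U) (Z : T -> V)
    (F : U -> V -> Rr) (good : U -> V -> bool) :
  mfin Y -> mfin Z ->
  (forall v u u', good u v -> good u' v -> F u v = F u' v -> u = u') ->
  forall e, e = pr P [set w | ~~ good (Y w) (Z w)] ->
  0 <= condH P Y Z - condH P (fun w => F (Y w) (Z w)) Z <=
    (e * (1 + ln (#|U|%:R)) + 2 * Num.sqrt e) / ln 2.
Proof.
move=> mY mZ Finj e ->.
have mFZ : mfin (fun w => F (Y w) (Z w)) by exact: (mfin_comp (fun x => F x.1 x.2) (mfin_pair mY mZ)).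
rewrite !condH_Hl // -mulrBl.
have -> : J (fun w => F (Y w) (Z w)) Z = pF (J Y Z) F.
  apply/funext => r; apply/funext => v; rewrite /J /pF /J.
  have := pr_sumB P (fun u => F u v == r) mY (mZ v).
  rewrite (_ : _ `&` _ = [set w | F (Y w) (Z w) = r /\ Z w = v]); last first.
    apply/seteqP; split => w /=; first by case=> -> /eqP.
    by case=> <- ->.
  move=> ->; apply: eq_bigr => u _; congr (pr P _).
  by apply/seteqP; split => w /=; case.
have -> : pr P [set w | ~~ good (Y w) (Z w)] = epsb (J Y Z) good.
  rewrite (pr_sum P (fun x : U * V => ~~ good x.1 x.2) (mfin_pair mY mZ)).
  apply: eq_bigr => -[u v] _; congr (pr P _).
  by apply/seteqP; split => w /=; case=> -> ->.
have := fano (fun u v => J_ge0 Y Z u v) (J_sum1 mY mZ) Finj.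
move=> /andP[h1 h2]; rewrite divr_ge0 ?h1 ?ler_pM2r ?invr_gt0 ?ln2_gt0 //.
by rewrite ltW // ln2_gt0.
Qed.

End CondH.
Section Proc.
Unset Implicit Arguments.
Context (d : measure_display) (T : measurableType d) (R : realType)
  (P : probability T R) (N : nat) (X : nat -> T -> 'I_N) (a0 : 'I_N).
Hypothesis hX : is_source X.

Lemma val_word k n w : tval (word X k n w) = [seq X i w | i <- iota k n].
Proof.
apply: (@eq_from_nth _ a0); first by rewrite size_tuple size_map size_iota.
move=> i; rewrite size_tuple => ilt.
rewrite (nth_map 0) ?size_iota // nth_iota //.
exact: (nth_mktuple (fun i : 'I_n => X (k + i) w) a0 (Ordinal ilt)).
Qed.

Lemma nth_word k n w i : (i < n)%N -> nth a0 (word X k n w) i = X (k + i) w.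
Proof. by move=> ilt; rewrite val_word (nth_map 0) ?size_iota // nth_iota. Qed.

Lemma mfin_word k n : mfin (word X k n).
Proof.
move=> v.
have -> : [set w | word X k n w = v] =
    \bigcap_(i in [set: 'I_n]) [set w | X (k + i) w = tnth v i].
  apply/seteqP; split => w /=.
    by move=> <- i _; rewrite tnth_mktuple.
  by move=> h; apply: eq_from_tnth => i; rewrite tnth_mktuple; exact: h.
apply: fin_bigcap_measurable; first exact: finite_finset.
by move=> i _; exact: hX.
Qed.

Lemma ST k n (Q : pred (n.-tuple 'I_N)) : stationary P X ->
  pr P [set w | Q (word X k n w)] = pr P [set w | Q (word X 0 n w)].
Proof.
move=> st; rewrite !(pr_sum P Q (mfin_word _ _)); apply: eq_bigr => v _.
by rewrite /Defs.pr st.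
Qed.

Lemma subword s i0 m n w : (i0 + m <= n)%N ->
  word X (s + i0) m w = [tuple nth a0 (word X s n w) (i0 + i) | i < m].
Proof.
move=> h; apply: eq_from_tnth => i; rewrite !tnth_mktuple nth_word ?addnA //.
have := ltn_ord i; lia.
Qed.

Lemma HS_step k l : stationary P X ->
  condH P (word X k.+1 l) (word X 0 k.+1) <= condH P (word X k l) (word X 0 k).
Proof.
move=> st.
pose g := fun x : (k.+1).-tuple 'I_N => [tuple nth a0 x (1 + i) | i < k].
have E1 : word X 1 k = (fun w => g (word X 0 k.+1 w)).
  apply/funext => w; have := subword 0 1 k k.+1 w (leqnn _).
  by rewrite add0n => ->.
apply: (le_trans (condH_mono P g (mfin_word k.+1 l) (mfin_word 0 k.+1))).
rewrite -E1 !condH_Hl; try exact: mfin_word.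
suff -> : J P (word X k.+1 l) (word X 1 k) = J P (word X k l) (word X 0 k) by [].
apply/funext => u; apply/funext => v; rewrite /J.
pose Q := fun x : (k + l).-tuple 'I_N =>
  ([tuple nth a0 x (k + i) | i < l] == u) && ([tuple nth a0 x (0 + i) | i < k] == v).
have E s : [set w | word X (s + k) l w = u /\ word X (s + 0) k w = v] =
           [set w | Q (word X s (k + l) w)].
  apply/seteqP; split => w /=; rewrite /Q;
    rewrite (subword s k l (k+l) w (leqnn _)) (subword s 0 k (k+l) w (leq_addr _ _)).
    by move=> [-> ->]; rewrite !eqxx.
  by move=> /andP[/eqP-> /eqP->].
have := E 1; have := E 0; rewrite !addn0 add0n add1n => -> ->.
exact: (ST 1 (k+l) Q st).
Qed.

Definition newb (s : seq 'I_N) t := nth a0 s t \notin take t s.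
Definition A t := [set w | X t w \notin [seq X i w | i <- iota 0 t]].

Lemma newb_map (f : nat -> 'I_N) m t : (t < m)%N ->
  newb [seq f i | i <- iota 0 m] t = (f t \notin [seq f i | i <- iota 0 t]).
Proof.
move=> tm; rewrite /newb (nth_map 0) ?size_iota // nth_iota // add0n.
by rewrite -map_take take_iota (minn_idPl (ltnW tm)).
Qed.

Lemma A_word t n : (t < n)%N -> A t = [set w | newb (word X 0 n w) t].
Proof.
by move=> tn; apply/seteqP; split => w /=; rewrite val_word newb_map.
Qed.

Lemma mA t : measurable (A t).
Proof. rewrite (A_word t t.+1 (ltnSn t)); exact: (mfin_pre (fun x : (t.+1).-tuple 'I_N => newb x t) (mfin_word 0 t.+1)). Qed.

Definition pn t := pr P (A t).

Lemma pn_mono t : stationary P X -> pn t.+1 <= pn t.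
Proof.
move=> st.
have sub : A t.+1 `<=` [set w | newb (word X 1 t.+1 w) t].
  move=> w /=; rewrite /newb val_word (nth_map 0) ?size_iota // nth_iota //.
  rewrite -map_take take_iota (minn_idPl (leqnSn t)) add1n.
  apply: contra => /mapP[i]; rewrite mem_iota => /andP[i1 it] e.
  by apply/mapP; exists i => //; rewrite mem_iota; lia.
apply: (le_trans (pr_le P (mA _) (mfin_pre (fun x : (t.+1).-tuple 'I_N => newb x t) (mfin_word 1 t.+1)) sub)).
by by rewrite (ST 1 t.+1 (fun x => newb x t) st) -(A_word t t.+1 (ltnSn t)).
Qed.

Lemma pn_anti s t : stationary P X -> (s <= t)%N -> pn t <= pn s.
Proof.
move=> st; elim: t => [|t IH]; first by rewrite leqn0 => /eqP ->.
rewrite leq_eqVlt ltnS => /orP[/eqP->//|/IH h].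
exact: le_trans (pn_mono t st) h.
Qed.

Lemma pn_ge0 t : 0 <= pn t.
Proof. exact: pr_ge0. Qed.

Lemma card_new n (x : n.-tuple 'I_N) : (#|[pred t : 'I_n | newb x t]| <= N)%N.
Proof.
rewrite -[X in (_ <= X)%N]card_ord; apply: (leq_card_in (fun t : 'I_n => nth a0 x t)).
have key : forall t1 t2 : 'I_n, (t1 < t2)%N -> newb x t2 -> nth a0 x t1 != nth a0 x t2.
  move=> t1 t2 h n2; apply/eqP => e; move: n2; rewrite /newb -e.
  by rewrite -(nth_take a0 h) mem_nth // size_take size_tuple ltn_ord.
move=> t1 t2; rewrite !inE => n1 n2 e; apply/val_inj/eqP.
case: (ltngtP t1 t2) => // h.
  by move: (key _ _ h n2); rewrite e eqxx.
by move: (key _ _ h n1); rewrite e eqxx.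
Qed.

Lemma pn_sum n : stationary P X -> \sum_(t < n) pn t <= N%:R.
Proof.
move=> st.
have E : forall t : 'I_n,
    pn t = \sum_(x : n.-tuple 'I_N | newb x t) pr P [set w | word X 0 n w = x].
  by move=> t; rewrite /pn (A_word t n (ltn_ord t)) (pr_sum P (fun x : n.-tuple 'I_N => newb x t) (mfin_word 0 n)).
rewrite (eq_bigr _ (fun t _ => E t)) (exchange_big_dep predT) //=.
apply: (@le_trans _ _ (\sum_x N%:R * pr P [set w | word X 0 n w = x])).
  apply: ler_sum => x _.
  rewrite (eq_bigl (fun t => t \in [pred t : 'I_n | newb x t])) ?sumr_const; last first.
    by move=> t; rewrite inE.
  rewrite mulrC -[_ *+ #|_|]mulr_natr ler_wpM2l ?pr_ge0 // ler_nat; exact: card_new.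
by rewrite -mulr_sumr pr_sum1 ?mulr1 //; exact: mfin_word.
Qed.

Lemma pn_bound t : stationary P X -> pn t <= N%:R / t.+1%:R.
Proof.
move=> st; rewrite ler_pdivlMr ?ltr0Sn //.
apply: le_trans (pn_sum t.+1 st).
have <- : \sum_(s < t.+1) pn t = pn t * t.+1%:R.
  by rewrite sumr_const card_ord mulr_natr.
apply: ler_sum => s _.
by apply: pn_anti => //; rewrite -ltnS.
Qed.

Definition goodw k l (u : l.-tuple 'I_N) (v : k.-tuple 'I_N) :=
  ~~ has (fun j => newb (tval v ++ tval u) (k + j)) (iota 0 l).

Lemma word_cat k l w :
  tval (word X 0 k w) ++ tval (word X k l w) = [seq X i w | i <- iota 0 (k + l)].
Proof. by rewrite !val_word iotaD map_cat add0n. Qed.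

Lemma mem_bigsetU (s : seq nat) (F : nat -> set T) j w :
  j \in s -> F j w -> (\big[setU/set0]_(i <- s) F i) w.
Proof.
elim: s => // i s IH; rewrite inE big_cons => /orP[/eqP <- Fw|js Fw].
  by left.
by right; apply: IH.
Qed.

Lemma union_bound (s : seq nat) (F : nat -> set T) :
  (forall i, measurable (F i)) ->
  pr P (\big[setU/set0]_(i <- s) F i) <= \sum_(i <- s) pr P (F i).
Proof.
move=> mF; elim: s => [|i s IH].
  by rewrite !big_nil /Defs.pr measure0.
rewrite !big_cons; apply: le_trans (prU2 P (mF i) _) _.
  exact: bigsetU_measurable.
by rewrite lerD2l.
Qed.

Lemma iter_addr (c : R) (m : nat) : iter m (+%R c) 0 = m%:R * c.
Proof.
elim: m => [|m IH]; first by rewrite mul0r.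
by rewrite iterS IH mulrSr mulrDl mul1r addrC.
Qed.

Lemma eps_bound k l : stationary P X ->
  pr P [set w | ~~ goodw k l (word X k l w) (word X 0 k w)] <=
  l%:R * (N%:R / k.+1%:R).
Proof.
move=> st.
have sub : [set w | ~~ goodw k l (word X k l w) (word X 0 k w)] `<=`
           \big[setU/set0]_(j <- iota 0 l) A (k + j).
  move=> w /=; rewrite negbK => /hasP[j]; rewrite mem_iota add0n => jl.
  rewrite word_cat newb_map ?ltn_add2l // => hn.
  by apply: (mem_bigsetU _ _ j); rewrite ?mem_iota.
have m1 : measurable [set w | ~~ goodw k l (word X k l w) (word X 0 k w)].
  exact: (mfin_pre (fun x : (l.-tuple 'I_N * k.-tuple 'I_N) => ~~ goodw k l x.1 x.2)
            (mfin_pair (mfin_word k l) (mfin_word 0 k))).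
apply: le_trans (pr_le P m1 (bigsetU_measurable _ _) sub) _.
  by move=> j _; exact: mA.
apply: le_trans (union_bound (iota 0 l) (fun j => A (k + j)) (fun i => mA (k + i))) _.
apply: (@le_trans _ _ (\sum_(j <- iota 0 l) (N%:R / k.+1%:R))).
  apply: ler_sum => j _; apply: le_trans (pn_anti k (k + j) st (leq_addr _ _)) _.
  exact: pn_bound.
rewrite (big_const_seq) /= count_predT size_iota.
by rewrite iter_addr.
Qed.

Definition rk (s : seq 'I_N) n := count (fun x : 'I_N => (x <= nth a0 s n)%N) (take n.+1 s).

Definition Fr k l (u : l.-tuple 'I_N) (v : k.-tuple 'I_N) : l.-tuple 'I_(k + l).+1 :=
  [tuple (inord (rk (tval v ++ tval u) (k + i)) : 'I_(k + l).+1) | i < l].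

Lemma count_iota_sum (a : pred nat) m : count a (iota 0 m) = (\sum_(j < m) (a j : nat))%N.
Proof.
elim: m => [|m IH]; first by rewrite big_ord0.
by rewrite big_ord_recr -IH -[in LHS]addn1 iotaD count_cat /= add0n addn0.
Qed.

Lemma rank_word_F k l w : rank_word X k l w = Fr k l (word X k l w) (word X 0 k w).
Proof.
apply: eq_from_tnth => i; rewrite !tnth_mktuple; congr inord.
rewrite /rank /rk word_cat /=.
have ikl : (k + i < k + l)%N by rewrite ltn_add2l.
rewrite (nth_map 0) ?size_iota // nth_iota // add0n.
rewrite -map_take take_iota (minn_idPl ikl) count_map count_iota_sum.
by [].
Qed.

Lemma count_lt (a a' : 'I_N) (s : seq 'I_N) : (a < a')%N -> a' \in s ->
  (count (fun x : 'I_N => (x <= a)%N) s < count (fun x : 'I_N => (x <= a')%N) s)%N.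
Proof.
move=> h; elim: s => // x s IH; rewrite inE => /orP[/eqP <-|hs] /=.
  rewrite leqnn (leqNgt a' a) h /= add0n add1n ltnS.
  by apply: sub_count => y /= ya; apply: leq_trans ya (ltnW h).
have := IH hs; case xa: (x <= a)%N => /=.
  by rewrite (leq_trans xa (ltnW h)) /= !add1n ltnS.
by rewrite add0n => h'; apply: leq_trans h' (leq_addl _ _).
Qed.

Lemma rk_bound (s : seq 'I_N) n : (rk s n <= n.+1)%N.
Proof.
apply: leq_trans (count_size _ _) _; rewrite size_take_min; exact: geq_minl.
Qed.

Lemma Fr_inj k l (v : k.-tuple 'I_N) (u u' : l.-tuple 'I_N) :
  goodw k l u v -> goodw k l u' v -> Fr k l u v = Fr k l u' v -> u = u'.
Proof.
move=> gu gu' e.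
set s := tval v ++ tval u; set s' := tval v ++ tval u'.
have ss : size s = (k + l)%N by rewrite size_cat !size_tuple.
have ss' : size s' = (k + l)%N by rewrite size_cat !size_tuple.
suff : forall j, (j <= l)%N -> take (k + j) s = take (k + j) s'.
  move=> /(_ l (leqnn l)); rewrite !take_oversize ?ss ?ss' // => ess.
  apply: val_inj; have := congr1 (drop k) ess.
  by rewrite !drop_size_cat ?size_tuple.
elim=> [|j IH] jl; first by rewrite !addn0 !take_size_cat ?size_tuple.
have jl' : (j < l)%N := jl.
have {}IH := IH (ltnW jl).
have kj : (k + j < k + l)%N by rewrite ltn_add2l.
rewrite addnS !(take_nth a0) ?ss ?ss' // IH; congr rcons.
have ej : rk s (k + j) = rk s' (k + j).
  have := congr1 (fun t => val (tnth t (Ordinal jl'))) e.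
  rewrite !tnth_mktuple /= !inordK //.
    apply: leq_ltn_trans (rk_bound _ _) _; by rewrite ltnS.
  apply: leq_ltn_trans (rk_bound _ _) _; by rewrite ltnS.
move: ej; rewrite /rk !(take_nth a0) ?ss ?ss' // IH -!cats1 !count_cat /= !leqnn.
move=> /eqP; rewrite eqn_add2r => /eqP ec.
have mem1 : nth a0 s (k + j) \in take (k + j) s'.
  rewrite -IH; move/hasPn: gu => /(_ j); rewrite mem_iota add0n jl' /=.
  by move=> /(_ isT); rewrite /newb negbK.
have mem2 : nth a0 s' (k + j) \in take (k + j) s'.
  move/hasPn: gu' => /(_ j); rewrite mem_iota add0n jl' /=.
  by move=> /(_ isT); rewrite /newb negbK.
case: (ltngtP (nth a0 s (k + j)) (nth a0 s' (k + j))) => h.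
- by have := count_lt _ _ _ h mem2; rewrite ec ltnn.
- by have := count_lt _ _ _ h mem1; rewrite ec ltnn.
- exact: val_inj.
Qed.

End Proc.

Unset Implicit Arguments.

Theorem lemma1 (d : measure_display) (T : measurableType d) (R : realType)
  (P : probability T R) (N : nat) (X : nat -> T -> 'I_N) :
  is_source X -> stationary P X -> ergodic P X ->
  forall l : nat, (1 <= l)%N ->
  exists L : R,
    (fun k : nat => condH P (word X k l) (word X 0 k)) @ \oo --> L /\
    (fun k : nat => condH P (rank_word X k l) (word X 0 k)) @ \oo --> L.
Proof.
move=> hX st _ l _.
case: (pselect (exists w : T, True)) => [[w0 _]|nT]; last first.
  exfalso; have E : [set: T] = set0.
    by apply/seteqP; split => // w _; apply: nT; exists w.
  by move: (probability_setT P); rewrite E measure0 => /eqP; rewrite eqe eq_sym oner_eq0.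
pose a0 := X 0 w0.
have mW := mfin_word d T N X hX.
pose HS := fun k => condH P (word X k l) (word X 0 k).
have HSd : forall k, HS k.+1 <= HS k := fun k => HS_step d T R P N X a0 hX k l st.
have HS0 : forall k, 0 <= HS k.
  move=> k; rewrite /HS condH_Hl ?mW //; apply: divr_ge0.
    by apply: Hl_ge0 => *; exact: J_ge0.
  exact: ltW (ln2_gt0 R).
have cHS : HS @ \oo --> inf (range HS).
  apply: nonincreasing_cvgn; first exact/nonincreasing_seqP.
  by exists 0 => _ [k _ <-]; exact: HS0.
exists (inf (range HS)); split; first exact: cHS.
pose K : R := #|{: l.-tuple 'I_N}|%:R.
pose c1 := 1 + ln K.
have c1ge0 : 0 <= c1.
  rewrite /c1 /K; apply: addr_ge0 => //; apply: ln_ge0.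
  rewrite ler1n lt0n; apply/eqP => /card0_eq /(_ [tuple of nseq l a0]).
  by rewrite inE.
pose del : nat -> R := fun k => l%:R * (N%:R / k.+1%:R).
pose h : nat -> R := fun k => (del k * c1 + 2 * Num.sqrt (del k)) / ln 2.
pose D : nat -> R := fun k => HS k - condH P (rank_word X k l) (word X 0 k).
have Dk : forall k, 0 <= D k <= h k.
  move=> k.
  have eRW : rank_word X k l =
      (fun w => Fr N a0 k l (word X k l w) (word X 0 k w)).
    by apply/funext => w; exact: rank_word_F.
  rewrite /D /HS eRW.
  have := @condH_fano _ _ R P _ _ _ _ _ _ _ (mW k l) (mW 0 k) (Fr_inj N a0 k l) _ (erefl _).
  move=> /andP[-> h1] /=; apply: le_trans h1 _.
  rewrite /h ler_pM2r ?invr_gt0 ?ln2_gt0 //.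
  have eb := eps_bound d T R P N X a0 hX k l st.
  have e0 := pr_ge0 P [set w | ~~ goodw N a0 k l (word X k l w) (word X 0 k w)].
  have s1 := ler_wpM2r c1ge0 eb.
  have s2 : Num.sqrt (pr P [set w | ~~ goodw N a0 k l (word X k l w) (word X 0 k w)])
     <= Num.sqrt (del k) by rewrite ler_sqrt ?(le_trans e0 eb).
  rewrite -/K -/c1 -/(del k); move: s1; rewrite -/(del k); lra.
have hcvg : h @ \oo --> 0.
  have dl : del @ \oo --> 0.
    have -> : del = (fun k => (l%:R * N%:R) * harmonic k).
      by apply/funext => k; rewrite /del /harmonic /= mulrA.
    have -> : (0:R) = l%:R * N%:R * 0 by rewrite mulr0.
    apply: cvgMl_tmp; exact: cvg_harmonic.
  have sl := continuous_cvg _ (@sqrt_continuous R 0) dl.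
  have -> : (0:R) = (0 * c1 + 2 * Num.sqrt 0) * (ln 2)^-1.
    by rewrite sqrtr0 mulr0 mul0r addr0 mul0r.
  apply: cvgMr_tmp; apply: cvgD; first by apply: cvgMr_tmp; exact: dl.
  by apply: cvgMl_tmp; exact: sl.

have Dc : D @ \oo --> 0.
  apply: (@squeeze_cvgr _ _ _ _ (fun _ => 0) h) => //.
    by apply: nearW => k; exact: Dk.
  exact: cvg_cst.
have -> : (fun k => condH P (rank_word X k l) (word X 0 k)) = HS - D.
  by apply/funext => k; rewrite /D /= opprB addrC subrK.
by rewrite -[X in _ --> X]subr0; apply: cvgB.
Qed.
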